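(* Let $\sigma$ be a proper schedule and $\sigma'$ the intermediate schedule obtained from $\sigma$ by an admissible swap at step $j^*\in J$ between machines $M_h$ and $M_i$. Then $C_j(\sigma')\le C_{j^*}(\sigma)$ for all $j\in J_H\cup J_I$.
   Context: Jobs $J=\{1,\dots,n\}$, job $j$ with positive integer processing time $p_j$, are scheduled non-preemptively on $m$ identical machines $M_1,\dots,M_m$; $p_{\max}=\max_j p_j$, $P(X)=\sum_{j\in X}p_j$. A proper schedule $\sigma$ is a partition $J=J_1(\sigma)\cup\dots\cup J_m(\sigma)$, the jobs of $J_i(\sigma)$ processed on $M_i$ consecutively from time $0$ without idle time in increasing index order; $C_j(\sigma)$ is the completion time of $j$. $J_j=\{1,\dots,j\}$, $J_{i,j}(\sigma)=J_i(\sigma)\cap J_j$, $\Delta_{h,i,j}(\sigma)=P(J_{h,j}(\sigma))-P(J_{i,j}(\sigma))$. The swap: admissible for proper $\sigma$ at step $j^*$ with machines $M_h,M_i$ if $j^*\in J_h(\sigma)$, $|J_i(\sigma)\setminus J_{i,j^*}(\sigma)|\ge 2p_{\max}$, and $\Delta_{h,i,j^*}(\sigma)\ge 4p_{\max}^2$. Let $J_I$ be the first (smallest-index) $2p_{\max}$ jobs of $J_i(\sigma)\setminus J_{i,j^*}(\sigma)$ and $J_H$ the last (largest-index) $2p_{\max}$ jobs of $J_{h,j^*}(\sigma)$; choose non-empty $J_{H'}\subseteq J_H$, $J_{I'}\subseteq J_I$ with $P(J_{H'})=P(J_{I'})$. The intermediate schedule $\sigma'$: on $M_h$ the time interval occupied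 by $J_H$ in $\sigma$ is filled by $J_H\setminus J_{H'}$ then $J_{I'}$; on $M_i$ the interval occupied by $J_I$ is filled by $J_{H'}$ then $J_I\setminus J_{I'}$ (each group in its order in $\sigma$); all other jobs keep their positions. *)

(* Defs.v *)
(* Jobs are 'I_n (job index k+1 of the paper is ordinal k),
   machines are 'I_m. *)
From mathcomp Require Import all_boot all_order all_algebra.
Set Implicit Arguments. Unset Strict Implicit. Unset Printing Implicit Defensive.

Section Sched.
Variables (n m : nat) (p : 'I_n -> nat).

Definition pmax : nat := \max_(j : 'I_n) p j.

Definition Pset (X : {set 'I_n}) : nat := \sum_(j in X) p j.

(* A proper schedule is given by the machine assignment sigma : 'I_n -> 'I_m;
   J_i(sigma) is its fibre, processed in increasing index order from time 0. *)
Definition Jm (sigma : 'I_n -> 'I_m) (i : 'I_m) : {set 'I_n} :=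
  [set j | sigma j == i].

Definition Jmj (sigma : 'I_n -> 'I_m) (i : 'I_m) (j : 'I_n) : {set 'I_n} :=
  [set k | (sigma k == i) && (k <= j)].

Definition Delta (sigma : 'I_n -> 'I_m) (h i : 'I_m) (j : 'I_n) : int :=
  ((Pset (Jmj sigma h j))%:Z - (Pset (Jmj sigma i j))%:Z)%R.

Definition completion (sigma : 'I_n -> 'I_m) (j : 'I_n) : nat :=
  Pset (Jmj sigma (sigma j) j).

(* the processing sequence of machine i in the proper schedule sigma
   (increasing index order; enum 'I_n is increasing) *)
Definition machine_seq (sigma : 'I_n -> 'I_m) (i : 'I_m) : seq 'I_n :=
  [seq j : 'I_n <- enum 'I_n | sigma j == i].

Definition admissible (sigma : 'I_n -> 'I_m) (jstar : 'I_n) (h i : 'I_m) : Prop :=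
  [/\ jstar \in Jm sigma h,
      2 * pmax <= #|Jm sigma i :\: Jmj sigma i jstar|
    & ((4 * pmax ^ 2)%:Z <= Delta sigma h i jstar)%R].

Definition JHseq (sigma : 'I_n -> 'I_m) (jstar : 'I_n) (h : 'I_m) : seq 'I_n :=
  let l := [seq j : 'I_n <- machine_seq sigma h | j <= jstar] in
  drop (size l - 2 * pmax) l.

Definition JIseq (sigma : 'I_n -> 'I_m) (jstar : 'I_n) (i : 'I_m) : seq 'I_n :=
  take (2 * pmax) [seq j : 'I_n <- machine_seq sigma i | jstar < j].

Definition JH sigma jstar h : {set 'I_n} := [set j in JHseq sigma jstar h].
Definition JI sigma jstar i : {set 'I_n} := [set j in JIseq sigma jstar i].

(* The intermediate schedule sigma', given as the processing sequence of each
   machine (jobs processed consecutively from time 0 without idle time).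
   On M_h the contiguous block J_H is replaced by (J_H \ J_H') then J_I';
   on M_i the contiguous block J_I is replaced by J_H' then (J_I \ J_I');
   everything else is unchanged. *)
Definition intermediate (sigma : 'I_n -> 'I_m) (jstar : 'I_n) (h i : 'I_m)
    (H' I' : {set 'I_n}) : 'I_m -> seq 'I_n :=
  fun k =>
    if k == h then
      let l := [seq j : 'I_n <- machine_seq sigma h | j <= jstar] in
      take (size l - 2 * pmax) l
      ++ [seq j : 'I_n <- JHseq sigma jstar h | j \notin H']
      ++ [seq j : 'I_n <- JIseq sigma jstar i | j \in I']
      ++ [seq j : 'I_n <- machine_seq sigma h | jstar < j]
    else if k == i then
      let a := [seq j : 'I_n <- machine_seq sigma i | jstar < j] in
      [seq j : 'I_n <- machine_seq sigma i | j <= jstar]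
      ++ [seq j : 'I_n <- JHseq sigma jstar h | j \in H']
      ++ [seq j : 'I_n <- JIseq sigma jstar i | j \notin I']
      ++ drop (2 * pmax) a
    else machine_seq sigma k.

Definition ctime_seq (s : seq 'I_n) (j : 'I_n) : nat :=
  \sum_(k <- take (index j s).+1 s) p k.

Definition ctime (S : 'I_m -> seq 'I_n) (j : 'I_n) : nat :=
  if [pick k | j \in S k] is Some k then ctime_seq (S k) j else 0.

End Sched.

(* Main.v *)
Require Import Defs.
From mathcomp Require Import all_boot all_order all_algebra.
From mathcomp Require Import zify.

Section Help.
Variables (n m : nat) (p : 'I_n -> nat).

Lemma ctime_cat (a x c : seq 'I_n) j : j \notin a -> j \in x ->
  ctime_seq p (a ++ x ++ c) j <= \sum_(k <- a) p k + \sum_(k <- x) p k.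
Proof.
move=> Ha Hx; rewrite /ctime_seq index_cat (negbTE Ha) index_cat Hx.
rewrite -addnS take_cat ltnNge leq_addr /= addKn take_cat.
have ix : index j x < size x by rewrite index_mem.
case: ifP => H; rewrite big_cat leq_add2l.
  by rewrite -[in X in _ <= X](cat_take_drop (index j x).+1 x) big_cat leq_addr.
have -> : (index j x).+1 - size x = 0 by apply/eqP; rewrite subn_eq0.
by rewrite take0 cats0.
Qed.

Lemma sum_le_pmax (s : seq 'I_n) : \sum_(k <- s) p k <= size s * pmax p.
Proof.
elim: s => [|a s IH]; first by rewrite big_nil.
rewrite big_cons /= mulSn leq_add //.
by rewrite /pmax (bigmax_sup a).
Qed.

Lemma sum_filter_set (s : seq 'I_n) (A : {set 'I_n}) : uniq s ->
  A \subset [set x in s] -> \sum_(k <- [seq k <- s | k \in A]) p k = Pset p A.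
Proof.
move=> us sA; rewrite /Pset -big_enum; apply: perm_big; apply: uniq_perm.
- exact: filter_uniq.
- exact: enum_uniq.
move=> x; rewrite mem_filter mem_enum; case xA: (x \in A) => //=.
by have := subsetP sA x xA; rewrite inE.
Qed.

Lemma sum_machine (sigma : 'I_n -> 'I_m) i (jstar : 'I_n) :
  \sum_(k <- [seq j : 'I_n <- machine_seq sigma i | j <= jstar]) p k = Pset p (Jmj sigma i jstar).
Proof.
rewrite /machine_seq -filter_predI big_filter /Pset big_enum_cond.
by apply: eq_bigl => k; rewrite !inE /= andbC.
Qed.

Lemma notin_drop_take (s : seq 'I_n) k x : uniq s -> x \in take k s -> x \notin drop k s.
Proof.
move=> us xt; apply/negP => xd.
move: us; rewrite -(cat_take_drop k s) cat_uniq => /and3P[_ /hasP H _].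
by apply: H; exists x.
Qed.

Lemma notin_take_drop (s : seq 'I_n) k x : uniq s -> x \in drop k s -> x \notin take k s.
Proof.
move=> us xd; apply/negP => xt.
by move: (notin_drop_take _ _ _ us xt); rewrite xd.
Qed.

Lemma uniq_ms (sigma : 'I_n -> 'I_m) i : uniq (machine_seq sigma i).
Proof. by rewrite /machine_seq filter_uniq // enum_uniq. Qed.

Lemma mem_ms (sigma : 'I_n -> 'I_m) k x : (x \in machine_seq sigma k) = (sigma x == k).
Proof. by rewrite /machine_seq mem_filter mem_enum andbT. Qed.

Lemma ctime_cat3 (a x1 x2 c : seq 'I_n) j : j \notin a -> j \in x1 ++ x2 ->
  ctime_seq p (a ++ x1 ++ x2 ++ c) j <=
  \sum_(k <- a) p k + \sum_(k <- x1) p k + \sum_(k <- x2) p k.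
Proof.
move=> Ha Hx; rewrite (catA x1 x2 c).
by rewrite -addnA -big_cat; apply: ctime_cat.
Qed.

Lemma sum_split (s : seq 'I_n) (P : pred 'I_n) :
  \sum_(k <- s) p k = \sum_(k <- [seq k <- s | P k]) p k + \sum_(k <- [seq k <- s | ~~ P k]) p k.
Proof. by rewrite !big_filter [LHS](bigID P). Qed.

End Help.

Theorem lemma6 (n m : nat) (p : 'I_n -> nat) (sigma : 'I_n -> 'I_m)
    (jstar : 'I_n) (h i : 'I_m) (H' I' : {set 'I_n}) :
  (forall j, 0 < p j) ->
  h != i ->
  admissible p sigma jstar h i ->
  H' \subset JH p sigma jstar h ->
  I' \subset JI p sigma jstar i ->
  H' != set0 -> I' != set0 ->
  Pset p H' = Pset p I' ->
  forall j, j \in JH p sigma jstar h :|: JI p sigma jstar i ->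
    ctime p (intermediate p sigma jstar h i H' I') j <= completion p sigma jstar.
Proof.
move=> _ hi [Hh _ HD] sH sI _ _ PHI j Hj.
set l := [seq j : 'I_n <- machine_seq sigma h | j <= jstar].
set li := [seq j : 'I_n <- machine_seq sigma i | j <= jstar].
set ai := [seq j : 'I_n <- machine_seq sigma i | jstar < j].
have ul : uniq l by rewrite filter_uniq // uniq_ms.
have uai : uniq ai by rewrite filter_uniq // uniq_ms.
have uJH : uniq (JHseq p sigma jstar h) by rewrite drop_uniq.
have uJI : uniq (JIseq p sigma jstar i) by rewrite take_uniq.
have sigh : sigma jstar = h by move: Hh; rewrite inE => /eqP.
have C : completion p sigma jstar = \sum_(k <- l) p k.
  by rewrite /completion sigh sum_machine.
have Ci : Pset p (Jmj sigma i jstar) = \sum_(k <- li) p k by rewrite sum_machine.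
have D : \sum_(k <- li) p k + 4 * pmax p ^ 2 <= \sum_(k <- l) p k.
  move: HD; rewrite /Delta -Ci -sum_machine -/l; lia.
have PH : Pset p H' = \sum_(k <- [seq k <- JHseq p sigma jstar h | k \in H']) p k.
  by rewrite sum_filter_set.
have PI : Pset p I' = \sum_(k <- [seq k <- JIseq p sigma jstar i | k \in I']) p k.
  by rewrite sum_filter_set.
have inJH x : x \in JH p sigma jstar h ->
   [/\ sigma x = h, x <= jstar & x \notin take (size l - 2 * pmax p) l].
  rewrite inE => xd; have xl : x \in l by apply: (mem_drop xd).
  move: (xl); rewrite mem_filter /machine_seq mem_filter => /andP[-> /andP[/eqP -> _]].
  by split => //; apply: notin_take_drop.
have inJI x : x \in JI p sigma jstar i ->
   [/\ sigma x = i, jstar < x & x \notin drop (2 * pmax p) ai].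
  rewrite inE => xt; have xa : x \in ai by apply: (mem_take xt).
  move: (xa); rewrite mem_filter /machine_seq mem_filter => /andP[-> /andP[/eqP -> _]].
  by split => //; apply: notin_drop_take.
have hneq : (i == h) = false by rewrite eq_sym (negbTE hi).
rewrite /ctime; case: pickP => [k Hk|_] //.
have HJ' : j \in JH p sigma jstar h \/ j \in JI p sigma jstar i by move: Hj; rewrite inE => /orP.
have EJ : JHseq p sigma jstar h = drop (size l - 2 * pmax p) l by [].
have El : \sum_(k <- l) p k = \sum_(k <- take (size l - 2 * pmax p) l) p k
    + \sum_(k <- JHseq p sigma jstar h) p k.
  by rewrite EJ -big_cat cat_take_drop.
have sJI : size (JIseq p sigma jstar i) <= 2 * pmax p.
  by rewrite /JIseq size_take; case: ifP => // /negbT; rewrite -leqNgt.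
have SJI := sum_le_pmax _ p (JIseq p sigma jstar i).
rewrite C; move: Hk; rewrite /intermediate.
case: (eqVneq k h) => [kh|kh].
  rewrite -/l => Hk.
  have ja : j \notin take (size l - 2 * pmax p) l.
    case: HJ' => [/inJH[] //|/inJI[sj _ _]].
    apply/negP => /mem_take; rewrite mem_filter mem_ms sj hneq. by rewrite andbF.
  have jc : j \notin [seq j : 'I_n <- machine_seq sigma h | jstar < j].
    rewrite mem_filter mem_ms; case: HJ' => [/inJH[-> jj _]|/inJI[-> _ _]].
      by rewrite ltnNge jj.
    by rewrite hneq andbF.
  eapply leq_trans; first (apply: ctime_cat3; first exact: ja).
    by move: Hk; rewrite !mem_cat (negbTE ja) (negbTE jc) orbF.
  rewrite -PI -PHI PH El (sum_split _ p (JHseq p sigma jstar h) (fun k => k \in H')).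
  by rewrite -addnA leq_add2l addnC.
case: (eqVneq k i) => [ki|ki].
  rewrite -/li -/ai => Hk.
  have ja : j \notin li.
    rewrite mem_filter mem_ms; case: HJ' => [/inJH[-> _ _]|/inJI[_ jj _]].
      by rewrite (negbTE hi) andbF.
    by rewrite leqNgt jj.
  have jc : j \notin drop (2 * pmax p) ai.
    case: HJ' => [/inJH[sj _ _]|/inJI[_ _ //]].
    apply/negP => /mem_drop; rewrite mem_filter mem_ms sj (negbTE hi). by rewrite andbF.
  eapply leq_trans; first (apply: ctime_cat3; first exact: ja).
    by move: Hk; rewrite !mem_cat (negbTE ja) (negbTE jc) orbF.
  rewrite -PH PHI PI.
  have := sum_split _ p (JIseq p sigma jstar i) (fun k => k \in I').
  move=> E; rewrite -addnA -E; apply: leq_trans _ D; rewrite leq_add2l.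
  apply: (leq_trans SJI); apply: leq_trans (leq_mul sJI (leqnn _)) _.
  move: (pmax p) => P; clear; nia.
rewrite mem_ms => /eqP sk.
case: HJ' => [/inJH[sj _ _]|/inJI[sj _ _]]; move: sk; rewrite sj => sk.
  by move: kh; rewrite sk eqxx.
by move: ki; rewrite sk eqxx.
Qed.
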